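(* Let $m\ge1$, $y\in\mathbb{R}^{2m+1}_+$ with $c:=\sqrt{\sum_{i=0}^{2m}y_i}>0$, and let $(x^t)_{t\ge0}$ be generated by $$x^{t+1}_j=x^t_j\,\frac1c\sum_{\ell=0}^m\frac{x^t_\ell\,y_{\ell+j}}{(x^t*x^t)_{\ell+j}},\qquad j=0,\dots,m,$$ from an initial $x^0\in\mathbb{R}^{m+1}_+$. Let $x^\infty$ be a limit point of $(x^t)$ and assume that $t\mapsto\mathcal{I}(x^\infty\|x^t)$ is decreasing. Then $x^t\to x^\infty$, and $x^\infty$ is the unique limit point of $(x^t)$.
   Context: For $x\in\mathbb{R}^{m+1}$ set $x_k=0$ for $k<0$, $k>m$, and $(x*x)_i=\sum_{j=0}^i x_{i-j}x_j$ for $i=0,\dots,2m$. For nonnegative vectors $u,v$ of equal length, $\mathcal{I}(u\|v)=\sum_i\big(u_i\log\frac{u_i}{v_i}-u_i+v_i\big)$ (convention $0\log0=0$; $+\infty$ if some $u_i>0=v_i$). The iteration is assumed well-defined (denominators positive, e.g. $x^0>0$). *)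

(* Defs.v *)
From HB Require Import structures.
From mathcomp Require Import all_boot all_order all_algebra.
From mathcomp Require Import all_classical all_reals all_analysis.
Set Implicit Arguments. Unset Strict Implicit. Unset Printing Implicit Defensive.
Import Order.TTheory GRing.Theory Num.Theory.
Import numFieldNormedType.Exports.
Local Open Scope classical_set_scope.
Local Open Scope ring_scope.

Definition xext (R : realType) (m : nat) (x : 'rV[R]_m.+1) (k : nat) : R :=
  if (k < m.+1)%N then x ord0 (inord k) else 0.

Definition selfconv (R : realType) (m : nat) (x : 'rV[R]_m.+1) (i : nat) : R :=
  \sum_(j < i.+1) xext x (i - j) * xext x j.

Definition yat (R : realType) (m : nat) (y : 'rV[R]_(m.*2).+1) (k : nat) : R :=
  if (k < (m.*2).+1)%N then y ord0 (inord k) else 0.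

Definition cconst (R : realType) (m : nat) (y : 'rV[R]_(m.*2).+1) : R :=
  Num.sqrt (\sum_(i < (m.*2).+1) y ord0 i).

Definition step (R : realType) (m : nat) (y : 'rV[R]_(m.*2).+1)
    (x : 'rV[R]_m.+1) : 'rV[R]_m.+1 :=
  \row_(j < m.+1) (x ord0 j * (cconst y)^-1 *
     \sum_(l < m.+1) (x ord0 l * yat y (l + j) / selfconv x (l + j))).

(* generalized Kullback-Leibler divergence, extended-real valued:
   I(u||v) = sum_i (u_i log(u_i/v_i) - u_i + v_i), 0 log 0 = 0,
   +oo if some u_i > 0 = v_i (for nonnegative u, v). *)
Definition Iterm (R : realType) (a b : R) : \bar R :=
  if a == 0 then b%:E
  else if b == 0 then +oo%E
  else (a * ln (a / b) - a + b)%:E.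

Definition Idiv (R : realType) (n : nat) (u v : 'rV[R]_n) : \bar R :=
  (\sum_(i < n) Iterm (u ord0 i) (v ord0 i))%E.

(* Main.v *)
Require Import Defs.
From HB Require Import structures.
From mathcomp Require Import all_boot all_order all_algebra.
From mathcomp Require Import all_classical all_reals all_analysis.
From mathcomp Require Import ring lra zify.
Import Order.TTheory GRing.Theory Num.Theory.
Import numFieldNormedType.Exports.
Local Open Scope classical_set_scope.
Local Open Scope ring_scope.

Section H.
Variable R : realType.

Lemma ln_le_sub1 (u : R) : 0 < u -> ln u <= u - 1.
Proof.
move=> u0; have := @le_ln1Dx R (u - 1); rewrite addrCA subrr addr0; apply; lra.
Qed.

Lemma Iterm_ge (a v : R) : 0 <= a -> 0 <= v ->
  (((Num.sqrt a - Num.sqrt v) ^+ 2)%:E <= Iterm a v)%E.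
Proof.
move=> a0 v0; rewrite /Iterm.
have [->|an0] := eqVneq a 0.
  by rewrite sqrtr0 sub0r sqrrN sqr_sqrtr.
have [->|vn0] := eqVneq v 0; first by rewrite leey.
rewrite lee_fin.
have ap : 0 < a by rewrite lt_def an0.
have vp : 0 < v by rewrite lt_def vn0.
have sap : 0 < Num.sqrt a by rewrite sqrtr_gt0.
have svp : 0 < Num.sqrt v by rewrite sqrtr_gt0.
set sa := Num.sqrt a in sap *; set sv := Num.sqrt v in svp *.
have ea : a = sa ^+ 2 by rewrite sqr_sqrtr.
have ev : v = sv ^+ 2 by rewrite sqr_sqrtr.
set r := sv / sa.
have rp : 0 < r by rewrite divr_gt0.
have hL := @ln_le_sub1 r rp.
have esv : sv = sa * r by rewrite /r mulrC divfK // gt_eqF.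
have hav : a / v = (r ^-1) ^+ 2.
  by rewrite ea ev /r invf_div expr_div_n.
rewrite hav lnXn ?invr_gt0 // lnV ?posrE //.
rewrite esv ea.
nra.
Qed.

Lemma Iterm_ge0 (a v : R) : 0 <= a -> 0 <= v -> (0 <= Iterm a v)%E.
Proof.
move=> a0 v0; have h := @Iterm_ge a v a0 v0; apply: (le_trans _ h); rewrite lee_fin; exact: sqr_ge0.
Qed.

Lemma Iterm_le (a v : R) : 0 < a -> 0 < v ->
  (Iterm a v <= ((a - v) ^+ 2 / v)%:E)%E.
Proof.
move=> ap vp; rewrite /Iterm gt_eqF // gt_eqF // lee_fin.
have := @ln_le_sub1 _ (divr_gt0 ap vp) => h.
have -> : (a - v) ^+ 2 / v = a * (a / v - 1) - a + v.
  by field; rewrite gt_eqF.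
by rewrite lerD2r lerD2r ler_pM2l.
Qed.

End H.
Arguments Iterm_le {R a v}.
Arguments Iterm_ge {R a v}.
Arguments Iterm_ge0 {R a v}.

Theorem proposition7 (R : realType) (m : nat) (hm : (1 <= m)%N)
    (y : 'rV[R]_(m.*2).+1) (x : nat -> 'rV[R]_m.+1) (xinf : 'rV[R]_m.+1) :
  (forall i, 0 <= y ord0 i) ->
  0 < cconst y ->
  (forall j, 0 <= x 0%N ord0 j) ->
  (forall t (i : nat), (i <= m.*2)%N -> 0 < selfconv (x t) i) ->
  (forall t, x t.+1 = step y (x t)) ->
  cluster (x @ \oo) xinf ->
  {homo (fun t => Idiv xinf (x t)) : s t / (s <= t)%N >-> (t <= s)%E} ->
  x @ \oo --> xinf /\ (forall z, cluster (x @ \oo) z -> z = xinf).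
Proof.
move=> y0 c0 x00 scp xS clu homo.
have xge0 : forall t j, 0 <= x t ord0 j.
  elim=> [|t IH] j //; rewrite xS mxE.
  apply: mulr_ge0; first by apply: mulr_ge0 => //; rewrite invr_ge0 ltW.
  apply: sumr_ge0 => l _; apply: divr_ge0.
    apply: mulr_ge0 => //; rewrite /yat; case: ifP => _ //; exact: y0.
  apply: ltW; apply: scp.
  by have := ltn_ord l; have := ltn_ord j; rewrite -addnn; lia.
have rx : (x @ \oo) (range x) by exists 0%N => // t _; exists t.
have clu' : forall B, nbhs xinf B -> exists t, B (x t).
  move=> B nB; have [w [[t _ <-] Bw]] := clu _ _ rx nB; by exists t.
have ainf0 : forall j, 0 <= xinf ord0 j.
  move=> j; rewrite leNgt; apply/negP => hn.
  have [t [_ /(_ ord0 j)]] := clu' _ (nbhsx_ballx xinf (- xinf ord0 j) ltac:(lra)).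
  rewrite /ball /= ltr_norml; have := xge0 t j; lra.
have conv : x @ \oo --> xinf.
  apply/cvg_ballP => e e0.
  set K := \sum_(j < m.+1) Num.sqrt (xinf ord0 j).
  have Kj : forall j, Num.sqrt (xinf ord0 j) <= K.
    move=> j; rewrite /K (bigD1 j) //= lerDl; apply: sumr_ge0 => i _.
    exact: sqrtr_ge0.
  have K0 : 0 <= K by apply: le_trans (Kj ord0); exact: sqrtr_ge0.
  set eta := Num.min 1 (e / (2 * K + 2)).
  have eta0 : 0 < eta by rewrite lt_min ltr01 /= divr_gt0 //; lra.
  have eta1 : eta <= 1 by rewrite ge_min lexx.
  have eta2 : eta * (2 * K + 2) <= e.
    rewrite -ler_pdivlMr; last by lra.
    by rewrite ge_min lexx orbT.
  set rho := eta ^+ 2 / (2 * m.+1%:R).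
  have Mp : 0 < m.+1%:R :> R by rewrite ltr0n.
  have rho0 : 0 < rho by rewrite divr_gt0 ?exprn_gt0 //; lra.
  have nB : nbhs xinf (fun w : 'rV[R]_m.+1 => forall j : 'I_m.+1,
      0 <= w ord0 j -> (Iterm (xinf ord0 j) (w ord0 j) < rho%:E)%E).
    have FF := @filter_forall _ _ (fun (j : 'I_m.+1) (w : 'rV[R]_m.+1) =>
      0 <= w ord0 j -> (Iterm (xinf ord0 j) (w ord0 j) < rho%:E)%E) (nbhs xinf) _.
    apply: FF => j.
    have [aj0|ajn0] := eqVneq (xinf ord0 j) 0.
      apply: filterS (nbhsx_ballx xinf rho rho0) => w [_ /(_ ord0 j)].
      rewrite /ball /= aj0 /Iterm eqxx lte_fin ltr_norml => h w0; lra.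
    have ajp : 0 < xinf ord0 j by rewrite lt_def ajn0 ainf0.
    set aj := xinf ord0 j in ajp ajn0 *.
    set eps := Num.min (aj / 2) (Num.min 1 (rho * aj / 2)).
    have ep0 : 0 < eps.
      rewrite !lt_min; apply/andP; split; first lra.
      apply/andP; split; first lra.
      by apply: divr_gt0 => //; apply: mulr_gt0.
    have ep1 : eps <= aj / 2 by rewrite ge_min lexx.
    have ep2 : eps <= 1 by rewrite ge_min ge_min lexx orbT.
    have ep3 : eps <= rho * aj / 2 by rewrite ge_min ge_min lexx !orbT.
    apply: filterS (nbhsx_ballx xinf eps ep0) => w [_ /(_ ord0 j)].
    rewrite /ball /= -/aj ltr_norml => /andP[h1 h2] w0.
    set v := w ord0 j in h1 h2 w0 *.
    have vp : 0 < v by lra.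
    apply: (le_lt_trans (Iterm_le ajp vp)).
    rewrite lte_fin ltr_pdivrMr //.
    have hd : (aj - v) ^+ 2 < eps ^+ 2 by nra.
    have : eps ^+ 2 <= rho * aj / 2 by nra.
    nra.
  have [t0 Bt0] := clu' _ nB.
  have Dt0 : (Idiv xinf (x t0) <= (eta ^+ 2 / 2)%:E)%E.
    rewrite /Idiv; apply: (@le_trans _ _ (\sum_(i < m.+1) rho%:E)%E).
      by apply: lee_sum => i _; apply: ltW; apply: Bt0; apply: xge0.
    rewrite sumEFin sumr_const card_ord lee_fin -mulr_natr /rho.
    rewrite le_eqVlt; apply/orP; left; apply/eqP; field; lra.
  exists t0 => // t /= ht.
  split => // i j; rewrite (ord1 i) /ball /=.
  have Dt : (Idiv xinf (x t) <= (eta ^+ 2 / 2)%:E)%E := le_trans (homo _ _ ht) Dt0.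
  have term : (Iterm (xinf ord0 j) (x t ord0 j) <= Idiv xinf (x t))%E.
    rewrite /Idiv (bigD1 j) //=; apply: leeDl; apply: sume_ge0 => k _.
    exact: Iterm_ge0.
  have := le_trans (Iterm_ge (ainf0 j) (xge0 t j)) (le_trans term Dt).
  rewrite lee_fin.
  have sa0 := sqrtr_ge0 (xinf ord0 j); have sv0 := sqrtr_ge0 (x t ord0 j).
  have ea := sqr_sqrtr (ainf0 j); have ev := sqr_sqrtr (xge0 t j).
  have hK := Kj j.
  move: sa0 sv0 ea ev hK.
  set sa := Num.sqrt (xinf ord0 j); set sv := Num.sqrt (x t ord0 j).
  move=> sa0 sv0 ea ev hK hsq.
  have hd : `|sa - sv| < eta.
    have hn2 : `|sa - sv| ^+ 2 = (sa - sv) ^+ 2 by rewrite real_normK ?num_real.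
    have hn := normr_ge0 (sa - sv).
    move: hn2 hn; set d := `|sa - sv|; move=> hn2 hn; nra.
  have -> : xinf ord0 j - x t ord0 j = (sa - sv) * (sa + sv) by rewrite -ea -ev; ring.
  rewrite normrM (ger0_norm (addr_ge0 sa0 sv0)).
  have hs : sa + sv <= 2 * K + 1.
    move: hd; rewrite ltr_norml => /andP[? ?]; lra.
  have hn := normr_ge0 (sa - sv).
  move: hd hn hs; set d := `|sa - sv|; nra.
split => // z /(cvg_cluster conv) hz.
by apply: esym; apply: norm_hausdorff.
Qed.
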